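(* Let $G\le\mathrm{O}(d)$ be finite and $x\in\mathbb{R}^d$. The following are equivalent: (a) $x\in P(G)$; (b) $G$ acts freely and transitively on the collection $\{V_p\}_{p\in[x]}$ via $g\cdot V_p:=V_{gp}$ (i.e. the sets $V_{gx}$, $g\in G$, are pairwise distinct); (c) for every $y\in\mathbb{R}^d$, $y\in V_x$ implies $x\in V_y$.
   Context: For $x\in\mathbb{R}^d$, $[x]:=\{gx:g\in G\}$. The open Voronoi cell $V_x$ is the set of $y\in\mathbb{R}^d$ such that $x$ is the unique maximizer of $\langle p,y\rangle$ over $p\in[x]$. The set of principal points is $P(G):=\{x\in\mathbb{R}^d:\mathrm{stab}_G(x)=\{\mathrm{id}\}\}$. *)

(* Defs.v *)
From mathcomp Require Import all_boot all_order all_algebra.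
From mathcomp Require Import reals.
Set Implicit Arguments. Unset Strict Implicit. Unset Printing Implicit Defensive.
Import Order.TTheory GRing.Theory Num.Theory.
Local Open Scope ring_scope.

Section Defs.
Variables (R : realType) (d : nat).

Definition dotp (p y : 'rV[R]_d) : R := (p *m y^T) 0 0.

Definition orthogonal (g : 'M[R]_d) : Prop := g *m g^T = 1%:M.

Definition finite_subgroup_O (G : seq 'M[R]_d) : Prop :=
  [/\ 1%:M \in G,
      (forall g h, g \in G -> h \in G -> g *m h \in G),
      (forall g, g \in G -> invmx g \in G) &
      (forall g, g \in G -> orthogonal g)].

(* action of a matrix g on a point x (column convention g x, written for rows) *)
Definition act (g : 'M[R]_d) (x : 'rV[R]_d) : 'rV[R]_d := x *m g^T.

Definition orbit (G : seq 'M[R]_d) (x : 'rV[R]_d) : seq 'rV[R]_d :=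
  [seq act g x | g <- G].

Definition voronoi (G : seq 'M[R]_d) (x y : 'rV[R]_d) : Prop :=
  forall p, p \in orbit G x -> p != x -> dotp p y < dotp x y.

Definition principal (G : seq 'M[R]_d) (x : 'rV[R]_d) : Prop :=
  forall g, g \in G -> act g x = x -> g = 1%:M.

End Defs.

(* Main.v *)
Require Import Defs.
From mathcomp Require Import all_boot all_order all_algebra.
From mathcomp Require Import reals.
From mathcomp Require Import lra.
Import Order.TTheory GRing.Theory Num.Theory.
Set Implicit Arguments. Unset Strict Implicit.
Local Open Scope ring_scope.

Section H.
Variables (R : realType) (d : nat).
Implicit Types (a b c x y z v : 'rV[R]_d) (g h : 'M[R]_d).

Lemma dotpE a b : dotp a b = \sum_i a 0 i * b 0 i.
Proof. by rewrite /dotp !mxE; apply: eq_bigr => i _; rewrite mxE. Qed.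

Lemma dotpC a b : dotp a b = dotp b a.
Proof. by rewrite !dotpE; apply: eq_bigr => i _; rewrite mulrC. Qed.

Lemma dotpDl a b c : dotp (a + b) c = dotp a c + dotp b c.
Proof. by rewrite !dotpE -big_split; apply: eq_bigr => i _; rewrite mxE mulrDl. Qed.

Lemma dotpNl a c : dotp (- a) c = - dotp a c.
Proof. by rewrite !dotpE -sumrN; apply: eq_bigr => i _; rewrite mxE mulNr. Qed.

Lemma dotpBl a b c : dotp (a - b) c = dotp a c - dotp b c.
Proof. by rewrite dotpDl dotpNl. Qed.

Lemma dotpZl (e : R) a c : dotp (e *: a) c = e * dotp a c.
Proof. by rewrite !dotpE mulr_sumr; apply: eq_bigr => i _; rewrite mxE mulrA. Qed.

Lemma dotpDr a b c : dotp c (a + b) = dotp c a + dotp c b.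
Proof. by rewrite dotpC dotpDl !(dotpC c). Qed.
Lemma dotpBr a b c : dotp c (a - b) = dotp c a - dotp c b.
Proof. by rewrite dotpC dotpBl !(dotpC c). Qed.
Lemma dotpZr (e : R) a c : dotp c (e *: a) = e * dotp c a.
Proof. by rewrite dotpC dotpZl dotpC. Qed.

Lemma dotp_ge0 a : 0 <= dotp a a.
Proof. by rewrite dotpE; apply: sumr_ge0 => i _; rewrite -expr2 sqr_ge0. Qed.

Lemma dotp_gt0 a : a != 0 -> 0 < dotp a a.
Proof.
move=> a0; rewrite lt_def dotp_ge0 andbT; apply: contra a0 => /eqP H.
rewrite dotpE in H; apply/eqP/matrixP => i j; rewrite mxE (ord1 i).
have := psumr_eq0P (fun k _ => (sqr_ge0 (a 0 k) : 0 <= a 0 k * a 0 k)) H (i:=j) isT.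
by move/eqP; rewrite mulf_eq0 orbb => /eqP.
Qed.

Lemma orthT g : Defs.orthogonal g -> g^T *m g = 1%:M.
Proof. by move=> H; apply: mulmx1C. Qed.

Lemma orth_inv g : Defs.orthogonal g -> invmx g = g^T.
Proof.
move=> H; have [U _] := mulmx1_unit H.
by rewrite -[invmx g]mulmx1 -H mulmxA mulVmx // mul1mx.
Qed.

Lemma act_act g h z : act g (act h z) = act (g *m h) z.
Proof. by rewrite /act trmx_mul mulmxA. Qed.

Lemma act1 z : act 1%:M z = z.
Proof. by rewrite /act trmx1 mulmx1. Qed.

Lemma dotp_act g a b : dotp (act g a) b = dotp a (b *m g).
Proof. by rewrite /dotp /act trmx_mul mulmxA. Qed.

Lemma dotp_act_norm g a : Defs.orthogonal g -> dotp (act g a) (act g a) = dotp a a.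
Proof. by move=> H; rewrite dotp_act /act -mulmxA orthT // mulmx1. Qed.

Lemma fixT g z : Defs.orthogonal g -> act g z = z -> z *m g = z.
Proof. by move=> H E; rewrite -{1}E /act -mulmxA orthT // mulmx1. Qed.

Lemma voronoi_self G z : finite_subgroup_O G -> voronoi G z z.
Proof.
case=> _ _ _ Ho p /mapP [k kG ->] ne.
have := @dotp_gt0 (z - act k z); rewrite subr_eq0 eq_sym => /(_ ne).
rewrite dotpBl !dotpBr (dotp_act_norm z (Ho _ kG)); have := dotpC z (act k z).
set A := dotp z z; set B := dotp z _; set C := dotp _ z.
clearbody A B C; lra.
Qed.

Lemma eps_lemma (s : seq 'rV[R]_d) (P : pred 'rV[R]_d) (f g : 'rV[R]_d -> R) :
  (forall p, p \in s -> P p -> 0 < f p) ->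
  exists2 e : R, 0 < e & forall p, p \in s -> P p -> e * `|g p| < f p.
Proof.
elim: s => [|q s IH] H.
  by exists 1 => // p; rewrite in_nil.
have [e e0 He] : exists2 e : R, 0 < e & forall p, p \in s -> P p -> e * `|g p| < f p.
  by apply: IH => p ps; apply: H; rewrite in_cons ps orbT.
pose eq := if P q then f q / (`|g q| + 1) else 1.
have eq0 : 0 < eq.
  rewrite /eq; case: ifP => // Pq; apply: divr_gt0; first by apply: H => //; rewrite in_cons eqxx.
  by rewrite ltr_wpDl.
exists (Num.min e eq); first by rewrite lt_min e0 eq0.
move=> p; rewrite in_cons => /orP [/eqP -> Pq|ps Pp].
  have fq : 0 < f q by apply: H => //; rewrite in_cons eqxx.
  have E : eq * (`|g q| + 1) = f q.
    by rewrite /eq Pq mulfVK // gt_eqF // ltr_wpDl.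
  have h1 : Num.min e eq * `|g q| <= eq * `|g q| by rewrite ler_wpM2r // ge_min lexx orbT.
  have h2 : 0 <= `|g q| := normr_ge0 _.
  lra.
have h1 : Num.min e eq * `|g p| <= e * `|g p| by rewrite ler_wpM2r // ge_min lexx.
have := He p ps Pp; lra.
Qed.

End H.

Theorem lemma23 (R : realType) (d : nat) (G : seq 'M[R]_d) (x : 'rV[R]_d) :
  finite_subgroup_O G ->
  [/\ (principal G x <->
       (forall g h, g \in G -> h \in G ->
          (forall y, voronoi G (act g x) y <-> voronoi G (act h x) y) -> g = h)),
      (principal G x <->
       (forall y : 'rV[R]_d, voronoi G x y -> voronoi G y x)) &
      ((forall g h, g \in G -> h \in G ->
          (forall y, voronoi G (act g x) y <-> voronoi G (act h x) y) -> g = h) <->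
       (forall y : 'rV[R]_d, voronoi G x y -> voronoi G y x))].
Proof.
move=> HG; have [G1 GM GI GO] := HG.
have GT : forall g, g \in G -> g^T \in G.
  by move=> g gG; rewrite -orth_inv; [exact: GI | exact: GO].
have AB : principal G x ->
       (forall g h, g \in G -> h \in G ->
          (forall y, voronoi G (act g x) y <-> voronoi G (act h x) y) -> g = h).
  move=> Pa g h gG hG E.
  have s1 := @voronoi_self _ _ G (act g x) HG; have s2 := @voronoi_self _ _ G (act h x) HG.
  have a1 : voronoi G (act h x) (act g x) by apply/E.
  have a2 : voronoi G (act g x) (act h x) by apply/E.
  have eqgh : act g x = act h x.
    apply/eqP; apply/negPn/negP => ne.
    have m1 : act g x \in Defs.orbit G (act h x).
      have -> : act g x = act (g *m h^T) (act h x).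
        by rewrite act_act -mulmxA (orthT (GO _ hG)) mulmx1.
      by apply: map_f; apply: GM => //; apply: GT.
    have m2 : act h x \in Defs.orbit G (act g x).
      have -> : act h x = act (h *m g^T) (act g x).
        by rewrite act_act -mulmxA (orthT (GO _ gG)) mulmx1.
      by apply: map_f; apply: GM => //; apply: GT.
    have i1 := a1 _ m1 ne.
    have i2 := a2 _ m2 (negbT (introF eqP (fun e => (elimN eqP ne) (esym e)))).
    have := dotp_ge0 (act g x - act h x).
    rewrite dotpBl !dotpBr.
    have := dotpC (act g x) (act h x).
    move: i1 i2.
    set A := dotp (act g x) (act g x); set B := dotp (act h x) (act h x).
    set C := dotp (act g x) (act h x); set D := dotp (act h x) (act g x).
    clearbody A B C D; lra.
  have : act (h^T *m g) x = x.
    by rewrite -act_act eqgh act_act (orthT (GO _ hG)) act1.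
  move/(Pa _ (GM _ _ (GT _ hG) gG)) => hg.
  by rewrite -[g]mul1mx -(GO h hG) -mulmxA hg mulmx1.
have BA : (forall g h, g \in G -> h \in G ->
          (forall y, voronoi G (act g x) y <-> voronoi G (act h x) y) -> g = h) ->
          principal G x.
  by move=> Pb g gG fx; apply: Pb gG G1 _ => y; rewrite fx act1.
have AC : principal G x -> (forall y : 'rV[R]_d, voronoi G x y -> voronoi G y x).
  move=> Pa y Vy q /mapP [g gG ->] ne.
  have xg : act g^T x = x *m g by rewrite /act trmxK.
  have ne' : act g^T x != x.
    apply: contra ne => /eqP fx.
    have g1 : g = 1%:M by rewrite -[g]trmxK (Pa _ (GT _ gG) fx) trmx1.
    by rewrite g1 act1.
  have := Vy _ (map_f _ (GT _ gG)) ne'.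
  by rewrite xg dotp_act (dotpC (x *m g)) (dotpC x).
have CA : (forall y : 'rV[R]_d, voronoi G x y -> voronoi G y x) -> principal G x.
  move=> Pc g gG fx; apply/eqP; apply/negPn/negP => g1.
  have [v hv] : exists v, act g v != v.
    case: (boolP [exists i : 'I_d, act g (delta_mx 0 i) != delta_mx 0 i]).
      by move/existsP => [i hi]; exists (delta_mx 0 i).
    move/existsPn => Hn; exfalso; apply: (elimN eqP g1).
    rewrite -[g]trmxK -[1%:M]trmx1; congr (_^T).
    apply/row_matrixP => i; rewrite !rowE mulmx1.
    by have := Hn i; rewrite negbK => /eqP.
  have [e e0 He] := @eps_lemma _ _ (Defs.orbit G x) (fun p => p != x)
      (fun p => dotp x x - dotp p x) (fun p => dotp x v - dotp p v)
      (fun p pin ne => ltac:(rewrite subr_gt0; exact: (@voronoi_self _ _ G x HG p pin ne))).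
  pose y := x + e *: v.
  have Vy : voronoi G x y.
    move=> p pin ne; have := He p pin ne.
    rewrite /y !dotpDr !dotpZr.
    have := ler_norm (- (dotp x v - dotp p v)); rewrite normrN.
    have h0 : 0 <= e by rewrite ltW.
    set a := dotp x v - dotp p v; move=> h1 h2.
    have h3 : e * (- a) <= e * `|a| by rewrite ler_wpM2l.
    move: h2 h3; rewrite /a; lra.
  have hy : act g y != y.
    rewrite /y /act mulmxDl -scalemxAl -/(act g x) fx.
    apply: contra hv => /eqP E; apply/eqP.
    apply: (scalerI (a := e)); first by rewrite gt_eqF.
    by move/addrI: E.
  have := Pc y Vy _ (map_f _ gG) hy.
  by rewrite dotp_act (fixT (GO g gG) fx) ltxx.
split; split => //.
- by move/BA/AC.
- by move/CA/AB.
Qed.
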